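(* Let $\rho>0$ be irrational and let $\Gamma_\rho\subset SL_2(\mathbb R)$ be the group generated by $\begin{pmatrix}1&1\\0&1\end{pmatrix}$ and $\begin{pmatrix}1&0\\\rho&1\end{pmatrix}$. Let $\left(\frac{p_n}{q_n}\right)_n$ be the sequence of continued fraction convergents of $\rho+1$. Then there is a constant $C>0$ (depending on $\rho$) such that for every $n$ there exist two distinct points $z_1,z_2$ of the orbit $\Gamma_\rho\binom{1}{0}$ with $\|z_1-z_2\|\le \frac{C}{q_{n+1}}$ and $\|z_1\|,\|z_2\|\le C\,q_nq_{n+1}$.
   Context: $\|\cdot\|$ is the Euclidean norm on $\mathbb R^2$; the group acts on $\mathbb R^2$ by matrix multiplication on column vectors. The convergents $p_n/q_n$ are the standard continued fraction convergents (in lowest terms, $q_n>0$). *)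

(* Defs.v *)
From Stdlib Require Import Reals ZArith.
Open Scope R_scope.

Definition irrational (x : R) : Prop :=
  forall (p q : Z), q <> 0%Z -> x <> IZR p / IZR q.

Record Mat2 := mkMat2 { m11 : R; m12 : R; m21 : R; m22 : R }.

Definition mat_mul (A B : Mat2) : Mat2 :=
  mkMat2 (m11 A * m11 B + m12 A * m21 B) (m11 A * m12 B + m12 A * m22 B)
         (m21 A * m11 B + m22 A * m21 B) (m21 A * m12 B + m22 A * m22 B).

Definition mat_id : Mat2 := mkMat2 1 0 0 1.

Definition mat_app (A : Mat2) (v : R * R) : R * R :=
  (m11 A * fst v + m12 A * snd v, m21 A * fst v + m22 A * snd v).

Definition genT : Mat2 := mkMat2 1 1 0 1.
Definition genTinv : Mat2 := mkMat2 1 (-1) 0 1.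
Definition genS (rho : R) : Mat2 := mkMat2 1 0 rho 1.
Definition genSinv (rho : R) : Mat2 := mkMat2 1 0 (- rho) 1.

Inductive in_Gamma (rho : R) : Mat2 -> Prop :=
| Gamma_id : in_Gamma rho mat_id
| Gamma_T : forall g, in_Gamma rho g -> in_Gamma rho (mat_mul genT g)
| Gamma_Tinv : forall g, in_Gamma rho g -> in_Gamma rho (mat_mul genTinv g)
| Gamma_S : forall g, in_Gamma rho g -> in_Gamma rho (mat_mul (genS rho) g)
| Gamma_Sinv : forall g, in_Gamma rho g -> in_Gamma rho (mat_mul (genSinv rho) g).

Definition in_orbit (rho : R) (z : R * R) : Prop :=
  exists g, in_Gamma rho g /\ z = mat_app g (1, 0).

Definition norm2 (v : R * R) : R := sqrt (fst v ^ 2 + snd v ^ 2).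
Definition vsub (v w : R * R) : R * R := (fst v - fst w, snd v - snd w).

(** Continued fraction expansion: x_0 = x, x_{k+1} = 1/(x_k - floor x_k),
    a_k = floor x_k  (Int_part is the floor function). *)
Fixpoint cf_x (x : R) (k : nat) : R :=
  match k with
  | O => x
  | S k => / (cf_x x k - IZR (Int_part (cf_x x k)))
  end.
Definition cf_a (x : R) (k : nat) : Z := Int_part (cf_x x k).

(** ((p_n, q_n), (p_{n-1}, q_{n-1})) with p_{-1} = 1, q_{-1} = 0,
    p_0 = a_0, q_0 = 1, p_n = a_n p_{n-1} + p_{n-2}, same for q. *)
Fixpoint cf_pq (x : R) (n : nat) : (Z * Z) * (Z * Z) :=
  match n with
  | O => ((cf_a x 0, 1%Z), (1%Z, 0%Z))
  | S m =>
      let '((p, q), (p', q')) := cf_pq x m in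
      let a := cf_a x (S m) in
      (((a * p + p')%Z, (a * q + q')%Z), (p, q))
  end.
Definition cf_p (x : R) (n : nat) : Z := fst (fst (cf_pq x n)).
Definition cf_q (x : R) (n : nat) : Z := snd (fst (cf_pq x n)).

(* Main.v *)
Require Import Defs.
From Stdlib Require Import Reals ZArith Lra Lia Psatz.
Open Scope R_scope.

Lemma orbit_eq rho v w : in_orbit rho v -> fst v = fst w -> snd v = snd w -> in_orbit rho w.
Proof. destruct v, w; simpl; intros H -> ->; exact H. Qed.

Lemma mat_app_mul A g v : mat_app (mat_mul A g) v = mat_app A (mat_app g v).
Proof. destruct v; unfold mat_app, mat_mul; simpl; f_equal; ring. Qed.

Lemma orbit_step rho A v : (forall g, in_Gamma rho g -> in_Gamma rho (mat_mul A g)) ->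
  in_orbit rho v -> in_orbit rho (mat_app A v).
Proof.
  intros HA [g [Hg ->]]. exists (mat_mul A g). split; [auto|]. now rewrite mat_app_mul.
Qed.

Lemma orbit_e1 rho : in_orbit rho (1, 0).
Proof. exists mat_id. split; [constructor|]. unfold mat_app, mat_id; simpl; f_equal; ring. Qed.

Lemma orbit_Tn rho v n : in_orbit rho v -> in_orbit rho (fst v + INR n * snd v, snd v).
Proof.
  intro H. induction n.
  - apply (orbit_eq _ _ _ H); simpl; try reflexivity; ring.
  - apply (orbit_eq _ _ _ (orbit_step rho genT _ (Gamma_T rho) IHn));
      rewrite ?S_INR; unfold mat_app, genT; simpl; ring.
Qed.

Lemma orbit_Tinvn rho v n : in_orbit rho v -> in_orbit rho (fst v - INR n * snd v, snd v).
Proof.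
  intro H. induction n.
  - apply (orbit_eq _ _ _ H); simpl; try reflexivity; ring.
  - apply (orbit_eq _ _ _ (orbit_step rho genTinv _ (Gamma_Tinv rho) IHn));
      rewrite ?S_INR; unfold mat_app, genTinv; simpl; ring.
Qed.

Lemma orbit_Sn rho v n : in_orbit rho v -> in_orbit rho (fst v, snd v + INR n * rho * fst v).
Proof.
  intro H. induction n.
  - apply (orbit_eq _ _ _ H); simpl; try reflexivity; ring.
  - apply (orbit_eq _ _ _ (orbit_step rho (genS rho) _ (Gamma_S rho) IHn));
      rewrite ?S_INR; unfold mat_app, genS; simpl; ring.
Qed.

Lemma orbit_Sinvn rho v n : in_orbit rho v -> in_orbit rho (fst v, snd v - INR n * rho * fst v).
Proof.
  intro H. induction n.
  - apply (orbit_eq _ _ _ H); simpl; try reflexivity; ring.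
  - apply (orbit_eq _ _ _ (orbit_step rho (genSinv rho) _ (Gamma_Sinv rho) IHn));
      rewrite ?S_INR; unfold mat_app, genSinv; simpl; ring.
Qed.

Lemma IZR_pos_INR p : IZR (Zpos p) = INR (Pos.to_nat p).
Proof. rewrite INR_IZR_INZ, positive_nat_Z; reflexivity. Qed.

Lemma orbit_Tz rho v k : in_orbit rho v -> in_orbit rho (fst v + IZR k * snd v, snd v).
Proof.
  intro H. destruct k as [|p|p].
  - apply (orbit_eq _ _ _ H); simpl; try reflexivity; ring.
  - rewrite IZR_pos_INR. now apply orbit_Tn.
  - apply (orbit_eq _ _ _ (orbit_Tinvn rho v (Pos.to_nat p) H)); simpl; auto.
    rewrite <- Pos2Z.opp_pos, opp_IZR, IZR_pos_INR; ring.
Qed.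

Lemma orbit_Sz rho v k : in_orbit rho v -> in_orbit rho (fst v, snd v + IZR k * rho * fst v).
Proof.
  intro H. destruct k as [|p|p].
  - apply (orbit_eq _ _ _ H); simpl; try reflexivity; ring.
  - rewrite IZR_pos_INR. now apply orbit_Sn.
  - apply (orbit_eq _ _ _ (orbit_Sinvn rho v (Pos.to_nat p) H)); simpl; auto.
    rewrite <- Pos2Z.opp_pos, opp_IZR, IZR_pos_INR; ring.
Qed.

Lemma norm2_le a b : norm2 (a, b) <= Rabs a + Rabs b.
Proof.
  unfold norm2; cbn [fst snd].
  pose proof (Rabs_pos a); pose proof (Rabs_pos b).
  rewrite <- (sqrt_Rsqr (Rabs a + Rabs b)) by lra.
  apply sqrt_le_1_alt. unfold Rsqr. rewrite <- (pow2_abs a), <- (pow2_abs b). simpl. nra.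
Qed.

Lemma frac_pos y : irrational y -> 0 < y - IZR (Int_part y) < 1.
Proof.
  intro H. destruct (base_Int_part y) as [H1 H2]. split; [|lra].
  destruct H1 as [H1|H1]; [lra|].
  exfalso. apply (H (Int_part y) 1%Z); [lia|]. rewrite H1. field.
Qed.

Lemma irr_next y : irrational y -> irrational (/ (y - IZR (Int_part y))).
Proof.
  intros H p q Hq E. pose proof (frac_pos y H) as F.
  set (m := Int_part y) in *. set (f := y - IZR m) in *.
  assert (Hq' : IZR q <> 0) by (apply not_0_IZR; auto).
  assert (Hp : IZR p <> 0).
  { intro Hp0. rewrite Hp0 in E. assert (/ f > 0) by (apply Rinv_0_lt_compat; lra).
    unfold Rdiv in E; rewrite Rmult_0_l in E. lra. }
  assert (Hf : f = IZR q / IZR p).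
  { rewrite <- (Rinv_inv f), E. field; auto. }
  apply (H (m * p + q)%Z p). { intro; subst; apply Hp; reflexivity. }
  rewrite plus_IZR, mult_IZR. replace y with (f + IZR m) by (unfold f; ring).
  rewrite Hf. field; auto.
Qed.

Lemma cfx_irr x n : irrational x -> irrational (cf_x x n).
Proof. intro H; induction n; simpl; auto. now apply irr_next. Qed.

Lemma cfx_gt1 x n : irrational x -> 1 < cf_x x (S n).
Proof.
  intro H. simpl. pose proof (frac_pos _ (cfx_irr x n H)) as F.
  set (f := cf_x x n - _) in *.
  apply (Rmult_lt_reg_l f); [lra|]. rewrite Rinv_r by lra. lra.
Qed.

Lemma Int_part_ge1 y : 1 < y -> (1 <= Int_part y)%Z.
Proof.
  intro H. destruct (base_Int_part y) as [H1 H2].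
  assert (0 < IZR (Int_part y)) by lra. apply lt_IZR in H0. lia.
Qed.

Lemma cf_inv x (hx : irrational x) n :
  let '((p,q),(p',q')) := cf_pq x n in
  (1 <= q)%Z /\ (0 <= q')%Z /\ (q' <= q)%Z /\
  IZR q' * x - IZR p' = - cf_x x (S n) * (IZR q * x - IZR p) /\
  (q' * p - q * p' = 1 \/ q' * p - q * p' = -1)%Z.
Proof.
  induction n.
  - simpl. pose proof (frac_pos x hx). unfold cf_a; simpl.
    repeat split; try lia. field. lra.
  - cbn [cf_pq]. destruct (cf_pq x n) as [[p q] [p' q']].
    destruct IHn as (H1 & H2 & H3 & H4 & H5).
    pose proof (Int_part_ge1 _ (cfx_gt1 x n hx)) as Ha.
    pose proof (frac_pos _ (cfx_irr x (S n) hx)) as F.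
    unfold cf_a.
    set (y := cf_x x (S n)) in *. set (a := Int_part y) in *.
    change (cf_x x (S (S n))) with (/ (y - IZR a)).
    repeat split; try nia.
    rewrite plus_IZR, mult_IZR, plus_IZR, mult_IZR.
    field_simplify_eq; [|lra]. nra.
Qed.

Definition Cst (rho : R) : R :=
  2*rho + (1 + 3*(rho+3)*rho) + (rho + 1 + 3*rho*(rho+2)).

Lemma finish rho q Q δ l l' k (hr: 0<rho) (hq: 1 <= q) (hQ: 1 <= Q) (hδ: 0<δ)
  (hδQ: δ * Q <= 1) (hk0: 0 <= IZR k) (hk: IZR k <= 2*Q)
  (hl: Rabs (IZR l) <= q*(rho+3)) (hl': Rabs (IZR l') <= q)
  (heq: IZR l - 1 - IZR l'*(rho+1) = δ) (hk1: IZR k * δ <= 1) (hk2: 1 < (IZR k+1)*δ) :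
  exists z1 z2 : R * R,
        in_orbit rho z1 /\ in_orbit rho z2 /\ z1 <> z2 /\
        norm2 (vsub z1 z2) <= Cst rho / Q /\
        norm2 z1 <= Cst rho * q * Q /\
        norm2 z2 <= Cst rho * q * Q.
Proof.
  exists (1 + IZR k * (IZR l * rho), IZR l * rho).
  exists (rho + 1 + IZR k * (rho + IZR l' * rho * (rho+1)), rho + IZR l' * rho * (rho+1)).
  assert (Hd : 0 <= Cst rho) by (unfold Cst; nra).
  split; [|split; [|split; [|split; [|split]]]].
  - pose proof (orbit_Sz rho _ l (orbit_e1 rho)) as H1.
    pose proof (orbit_Tz rho _ k H1) as H2.
    apply (orbit_eq _ _ _ H2); simpl; ring.
  - pose proof (orbit_Sz rho _ 1 (orbit_e1 rho)) as H1.
    pose proof (orbit_Tz rho _ 1 H1) as H2.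
    pose proof (orbit_Sz rho _ l' H2) as H3.
    pose proof (orbit_Tz rho _ k H3) as H4.
    apply (orbit_eq _ _ _ H4); simpl; ring.
  - intro E. injection E as E1 E2.
    assert (rho * δ = 0) by (rewrite <- heq; nra). nra.
  - replace (vsub _ _) with (rho*(IZR k*δ - 1), rho*δ)
      by (unfold vsub; simpl; f_equal; rewrite <- heq; ring).
    eapply Rle_trans; [apply norm2_le|].
    rewrite !Rabs_mult. rewrite (Rabs_pos_eq rho) by lra. rewrite (Rabs_pos_eq δ) by lra. rewrite (Rabs_left1 (IZR k * δ - 1)) by lra.
    apply Rle_trans with (2*rho*δ); [nra|].
    unfold Rdiv. apply Rle_trans with (2*rho*/Q).
    + apply Rmult_le_compat_l; [lra|].
      apply (Rmult_le_reg_r Q); [lra|]. rewrite Rinv_l by lra. lra.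
    + apply Rmult_le_compat_r; [apply Rlt_le, Rinv_0_lt_compat; lra|]. unfold Cst; nra.
  - eapply Rle_trans; [apply norm2_le|].
    set (L := Rabs (IZR l)) in *.
    assert (HL0 : 0 <= L) by apply Rabs_pos.
    assert (A1 : Rabs (1 + IZR k * (IZR l * rho)) <= 1 + IZR k * (L * rho)).
    { eapply Rle_trans; [apply Rabs_triang|].
      rewrite !Rabs_mult, Rabs_R1, (Rabs_pos_eq (IZR k)), (Rabs_pos_eq rho) by lra. unfold L; lra. }
    assert (A2 : Rabs (IZR l * rho) = L * rho) by (rewrite Rabs_mult, (Rabs_pos_eq rho) by lra; reflexivity).
    rewrite A2.
    assert (A3 : IZR k * L <= 2*Q*(q*(rho+3))) by (apply Rmult_le_compat; lra).
    assert (B1 : 1 <= q*Q) by nra.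
    assert (B2 : IZR k * (L * rho) <= 2*(q*Q)*(rho+3)*rho).
    { replace (IZR k * (L * rho)) with ((IZR k * L) * rho) by ring.
      replace (2*(q*Q)*(rho+3)*rho) with ((2*Q*(q*(rho+3))) * rho) by ring.
      apply Rmult_le_compat_r; lra. }
    assert (B3 : L * rho <= (q*Q)*(rho+3)*rho).
    { apply Rmult_le_compat_r; [lra|]. apply Rle_trans with (q*(rho+3)); [lra|]. nra. }
    assert (B4 : 0 <= (q*Q) * (2*rho + (rho + 1 + 3*rho*(rho+2)))) by nra.
    unfold Cst. nra.
  - eapply Rle_trans; [apply norm2_le|].
    set (W := Rabs (rho + IZR l' * rho * (rho+1))) in *.
    assert (HW : W <= q*rho*(rho+2)).
    { unfold W. eapply Rle_trans; [apply Rabs_triang|].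
      rewrite !Rabs_mult, (Rabs_pos_eq rho), (Rabs_pos_eq (rho+1)) by lra. nra. }
    assert (HW0 : 0 <= W) by apply Rabs_pos.
    assert (A1 : Rabs (rho + 1 + IZR k * (rho + IZR l' * rho * (rho+1))) <= rho + 1 + IZR k * W).
    { eapply Rle_trans; [apply Rabs_triang|].
      rewrite !Rabs_mult, (Rabs_pos_eq (IZR k)), (Rabs_pos_eq (rho+1)) by lra. unfold W; lra. }
    assert (A3 : IZR k * W <= 2*Q*(q*rho*(rho+2))) by (apply Rmult_le_compat; lra).
    assert (B1 : 1 <= q*Q) by nra.
    assert (B3 : W <= (q*Q)*rho*(rho+2)).
    { apply Rle_trans with (q*rho*(rho+2)); [lra|].
      assert (0 <= q*rho*(rho+2)) by nra. nra. }
    assert (B4 : 0 <= (q*Q) * (2*rho + (1 + 3*(rho+3)*rho))) by nra.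
    assert (B5 : rho + 1 <= (q*Q)*(rho+1)) by nra.
    unfold Cst. nra.
Qed.

Theorem proposition1p4 (rho : R) (hrho : 0 < rho) (hirr : irrational rho) :
  exists C : R, 0 < C /\
    forall n : nat,
      exists z1 z2 : R * R,
        in_orbit rho z1 /\ in_orbit rho z2 /\ z1 <> z2 /\
        norm2 (vsub z1 z2) <= C / IZR (cf_q (rho + 1) (S n)) /\
        norm2 z1 <= C * IZR (cf_q (rho + 1) n) * IZR (cf_q (rho + 1) (S n)) /\
        norm2 z2 <= C * IZR (cf_q (rho + 1) n) * IZR (cf_q (rho + 1) (S n)).
Proof.
  assert (hx : irrational (rho + 1)).
  { intros p q Hq E. apply (hirr (p - q)%Z q Hq).
    assert (IZR q <> 0) by (apply not_0_IZR; auto).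
    rewrite minus_IZR. replace rho with (rho + 1 - 1) by ring. rewrite E. field; auto. }
  exists (Cst rho). split; [unfold Cst; nra|].
  intro n. pose proof (cf_inv (rho + 1) hx n) as H.
  unfold cf_q. cbn [cf_pq]. destruct (cf_pq (rho + 1) n) as [[p q] [p' q']].
  cbn [fst snd].
  destruct H as (H1 & H2 & H3 & H4 & H5).
  pose proof (Int_part_ge1 _ (cfx_gt1 (rho+1) n hx)) as Ha.
  pose proof (cfx_gt1 (rho+1) n hx) as Hy.
  unfold cf_a.
  set (x := rho + 1) in *.
  set (y := cf_x x (S n)) in *. set (a := Int_part y) in *.
  destruct (base_Int_part y) as [Hb1 Hb2]. fold a in Hb1, Hb2.
  set (D := IZR q * x - IZR p) in *.
  assert (Hdet : D * (IZR q * y + IZR q') = 1 \/ D * (IZR q * y + IZR q') = -1).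
  { assert (E : D * (IZR q * y + IZR q') = IZR q * (y * D) + IZR q' * D) by ring.
    rewrite E. replace (y * D) with (- (IZR q' * x - IZR p')) by lra.
    unfold D.
    destruct H5 as [H5|H5]; [right|left];
      apply (f_equal IZR) in H5; rewrite minus_IZR, !mult_IZR in H5; lra. }
  assert (Hq1 : 1 <= IZR q) by (apply IZR_le; lia).
  assert (Hq'0 : 0 <= IZR q') by (apply IZR_le; lia).
  assert (Ha1 : 1 <= IZR a) by (apply IZR_le; lia).
  set (M := IZR q * y + IZR q') in *.
  set (Q := IZR a * IZR q + IZR q').
  rewrite plus_IZR, mult_IZR. fold Q.
  assert (E1 : IZR q * y <= IZR q * (IZR a + 1)) by (apply Rmult_le_compat_l; lra).
  assert (E2 : IZR q * IZR a <= IZR q * y) by (apply Rmult_le_compat_l; lra).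
  assert (E3 : IZR q <= IZR a * IZR q) by nra.
  assert (HQM : Q <= M) by (unfold Q, M; nra).
  assert (HMQ : M <= 2 * Q) by (unfold Q, M; nra).
  assert (HQ1 : 1 <= Q) by (unfold Q; nra).
  set (δ := Rabs D).
  assert (Hδ : δ * M = 1).
  { unfold δ. destruct (Rle_or_lt 0 D).
    - rewrite Rabs_pos_eq by lra. destruct Hdet; nra.
    - rewrite Rabs_left by lra. destruct Hdet; nra. }
  assert (Hδ0 : 0 < δ) by (assert (0 <= δ) by apply Rabs_pos; nra).
  assert (HδQ : δ * Q <= 1) by nra.
  assert (Hδ1 : δ <= 1) by nra.
  set (k := Int_part M).
  destruct (base_Int_part M) as [Hk1 Hk2]. fold k in Hk1, Hk2.
  assert (Hk0 : 0 <= IZR k).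
  { assert (IZR 0 < IZR (k + 1)) by (rewrite plus_IZR; simpl; lra). apply lt_IZR in H.
    apply IZR_le. lia. }
  assert (Hp : Rabs (IZR p) <= IZR q * x + 1).
  { replace (IZR p) with (IZR q * x - D) by (unfold D; ring).
    eapply Rle_trans; [apply Rabs_triang|]. rewrite Rabs_Ropp.
    rewrite Rabs_pos_eq by (unfold x; nra). fold δ. lra. }
  assert (Hkd1 : IZR k * δ <= 1) by nra.
  assert (Hkd2 : 1 < (IZR k + 1) * δ) by nra.
  destruct (Rlt_or_le D 0) as [HD|HD].
  - apply (finish rho (IZR q) Q δ (p + 1)%Z q k); try lra.
    + rewrite plus_IZR. eapply Rle_trans; [apply Rabs_triang|]. rewrite Rabs_R1.
      unfold x in Hp. nra.
    + rewrite Rabs_pos_eq; lra.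
    + unfold δ. rewrite Rabs_left by lra. unfold D, x. rewrite plus_IZR. ring.
  - apply (finish rho (IZR q) Q δ (- p + 1)%Z (- q) k); try lra.
    + rewrite plus_IZR, opp_IZR. eapply Rle_trans; [apply Rabs_triang|]. rewrite Rabs_R1, Rabs_Ropp.
      unfold x in Hp. nra.
    + rewrite opp_IZR, Rabs_Ropp, Rabs_pos_eq; lra.
    + unfold δ. rewrite Rabs_pos_eq by lra. unfold D, x. rewrite plus_IZR, !opp_IZR. ring.
Qed.
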